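(* In Setting U, let $(\pi_i)$ be a positive numerical steady state, and suppose there is a constant $C_P>0$ such that for every real vector $(u_i)$ with $\sum_iu_i\pi_i|C_i|=0$, $$\sum_iu_i^2\pi_i|C_i|\le C_P\sum_{i,j}\frac{|\Gamma_{ij}|(\pi_i+\pi_j)}{|\mathbf y_i-\mathbf y_j|}(u_i-u_j)^2 .$$ Let $\rho(t)$ solve the upwind scheme with $\sum_i\rho_i(0)|C_i|=\sum_i\pi_i|C_i|$. Then for all $t\ge0$, $$\sum_i\frac{(\rho_i(t)-\pi_i)^2}{\pi_i}|C_i|\le e^{-\frac{D}{2C_P}t}\sum_i\frac{(\rho_i(0)-\pi_i)^2}{\pi_i}|C_i| .$$
   Context: Setting U: Let $\mathcal N\subset\mathbb R^\ell$ be a smooth compact connected $d$-dimensional submanifold without boundary, with geodesic distance $d_{\mathcal N}$. Let $\mathbf y_1,\dots,\mathbf y_n\in\mathcal N$ be distinct points with Voronoi cells $C_i:=\{\mathbf y\in\mathcal N: d_{\mathcal N}(\mathbf y,\mathbf y_i)\le d_{\mathcal N}(\mathbf y,\mathbf y_j)\ \forall j\}$, volumes $|C_i|:=\mathcal H^d(C_i)>0$, faces $\Gamma_{ij}:=C_i\cap C_j$ with $|\Gamma_{ij}|:=\mathcal H^{d-1}(\Gamma_{ij})$ ($|\Gamma_{ii}|:=0$), and neighbor sets $VF(i):=\{j\ne i:\Gamma_{ij}\ne\emptyset\}$; assume $|\Gamma_{ij}|>0$ for $j\in VF(i)$ and that the graph with edges $\{i,j\}$, $j\in VF(i)$, is connected.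 $|\mathbf y_j-\mathbf y_i|$ is the Euclidean distance in $\mathbb R^\ell$. Let $D>0$ be a constant and $\vec b$ a smooth tangent vector field on $\mathcal N$. For $j\in VF(i)$, $\vec n_{ij}$ is the unit normal to $\Gamma_{ij}$ (tangent to $\mathcal N$) pointing from $C_i$ into $C_j$, and $(\vec b\cdot\vec n)_{ij}$ is the value of $\vec b\cdot\vec n_{ij}$ at the point where the minimizing geodesic from $\mathbf y_i$ to $\mathbf y_j$ meets $\Gamma_{ij}$, so that $(\vec b\cdot\vec n)_{ji}=-(\vec b\cdot\vec n)_{ij}$. For real $x$, $x^+:=\max(x,0)$, $x^-:=\max(-x,0)$. Define $Q_{ij}:=\frac{|\Gamma_{ij}|}{|C_i|}\big(\frac{D}{|\mathbf y_j-\mathbf y_i|}+(\vec b\cdot\vec n)^+_{ij}\big)$ for $j\in VF(i)$, $Q_{ij}:=0$ for $j\notin VF(i)\cup\{i\}$, and $Q_{ii}:=-\sum_{j\ne i}Q_{ij}$. The upwind scheme is the ODE system $\frac{\mathrm d}{\mathrm dt}(\rho_i|C_i|)=\sum_{j\in VF(i)}|\Gamma_{ij}|\big(\frac{D(\rho_j-\rho_i)}{|\mathbf y_j-\mathbf y_i|}+(\vec b\cdot\vec n)^-_{ij}\rho_j-(\vec b\cdot\vec n)^+_{ij}\rho_i\big)$, $i=1,\dots,n$, equivalently $\frac{\mathrm d}{\mathrm dt}(\rho_i|C_i|)=\sum_jQ_{ji}\rho_j|C_j|$. A numerical steady state is a vector $(\pi_i)$ with $\sum_jQ_{ji}\pi_j|C_j|=0$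 for all $i$. *)

(* Defs.v *)
From HB Require Import structures.
From mathcomp Require Import all_boot all_order all_algebra.
From mathcomp Require Import all_classical all_reals all_analysis.
Set Implicit Arguments. Unset Strict Implicit. Unset Printing Implicit Defensive.
Import Order.TTheory GRing.Theory Num.Theory.
Local Open Scope ring_scope.

(* Discrete data of Setting U (Voronoi tessellation of a manifold), abstracted:
   n cells indexed by 'I_n, generator points y i in R^l,
   vol i = |C_i|, gam i j = |Gamma_ij|, nb i j <-> j \in VF(i),
   bn i j = (b . n)_ij. *)

Definition eucl_dist (R : realType) (l : nat) (y : 'I_l -> R) (z : 'I_l -> R) : R :=
  Num.sqrt (\sum_(k < l) (y k - z k) ^+ 2).

Definition posp (R : realType) (x : R) : R := Num.max x 0.
Definition negp (R : realType) (x : R) : R := Num.max (- x) 0.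

Definition Qoff (R : realType) (n l : nat) (y : 'I_n -> 'I_l -> R)
  (vol : 'I_n -> R) (gam : 'I_n -> 'I_n -> R) (nb : rel 'I_n)
  (bn : 'I_n -> 'I_n -> R) (D : R) (i j : 'I_n) : R :=
  if nb i j then gam i j / vol i * (D / eucl_dist (y j) (y i) + posp (bn i j)) else 0.

Definition Qmat (R : realType) (n l : nat) (y : 'I_n -> 'I_l -> R)
  (vol : 'I_n -> R) (gam : 'I_n -> 'I_n -> R) (nb : rel 'I_n)
  (bn : 'I_n -> 'I_n -> R) (D : R) (i j : 'I_n) : R :=
  if i == j then - \sum_(k | k != i) Qoff y vol gam nb bn D i k
  else Qoff y vol gam nb bn D i j.

Definition upwind_rhs (R : realType) (n l : nat) (y : 'I_n -> 'I_l -> R)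
  (gam : 'I_n -> 'I_n -> R) (nb : rel 'I_n)
  (bn : 'I_n -> 'I_n -> R) (D : R) (rho : 'I_n -> R) (i : 'I_n) : R :=
  \sum_(j | nb i j) gam i j *
     (D * (rho j - rho i) / eucl_dist (y j) (y i) + negp (bn i j) * rho j
      - posp (bn i j) * rho i).

Definition steady_state (R : realType) (n l : nat) (y : 'I_n -> 'I_l -> R)
  (vol : 'I_n -> R) (gam : 'I_n -> 'I_n -> R) (nb : rel 'I_n)
  (bn : 'I_n -> 'I_n -> R) (D : R) (pi : 'I_n -> R) : Prop :=
  forall i, \sum_j Qmat y vol gam nb bn D j i * pi j * vol j = 0.

(* Main.v *)
Require Import Defs.
From HB Require Import structures.
From mathcomp Require Import all_boot all_order all_algebra.
From mathcomp Require Import all_classical all_reals all_analysis.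
From mathcomp Require Import ring lra.
Import Order.TTheory GRing.Theory Num.Theory.
Local Open Scope ring_scope.

Lemma dsum (R : realType) n (h : 'I_n -> R -> R) (x : R) (dh : 'I_n -> R) :
  (forall i, is_derive x 1 (h i) (dh i)) ->
  is_derive x 1 (fun s => \sum_i h i s) (\sum_i dh i).
Proof.
move=> H; have := is_derive_sum H.
have -> : (\sum_(i < n) h i) = (fun s => \sum_i h i s).
  by apply/funext => s; rewrite fct_sumE.
by [].
Qed.

Lemma dist_sym (R : realType) l (a b : 'I_l -> R) : eucl_dist a b = eucl_dist b a.
Proof.
by rewrite /eucl_dist; congr Num.sqrt; apply: eq_bigr => k _; rewrite -sqrrN opprB.
Qed.

Lemma flux (R : realType) (n l : nat)
  (y : 'I_n -> 'I_l -> R) (vol : 'I_n -> R) (gam : 'I_n -> 'I_n -> R)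
  (nb : rel 'I_n) (bn : 'I_n -> 'I_n -> R) (D : R) (r : 'I_n -> R)
  (hvol : forall i, 0 < vol i)
  (hnb_sym : forall i j, nb i j = nb j i)
  (hgam_sym : forall i j, gam i j = gam j i)
  (hbn : forall i j, nb i j -> bn j i = - bn i j) i :
  upwind_rhs y gam nb bn D r i =
  \sum_j (Qoff y vol gam nb bn D j i * (r j * vol j)
          - Qoff y vol gam nb bn D i j * (r i * vol i)).
Proof.
rewrite /upwind_rhs [RHS](bigID (nb i)) /= [X in _ = _ + X]big1 ?addr0; last first.
  move=> j /negbTE nij; rewrite /Qoff nij hnb_sym nij; ring.
apply: eq_bigr => j nij.
rewrite /Qoff nij -hnb_sym nij (hbn _ _ nij) (hgam_sym j i) (@dist_sym _ _ (y i)).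
have v1 := hvol i; have v2 := hvol j.
rewrite /negp /posp.
move: (eucl_dist (y j) (y i)) => d.
set k := d^-1.
rewrite !mulrA.
have e : forall z : R, D * z / d = D * k * z by move=> z; rewrite /k; ring.
rewrite e; field; apply/andP; split; exact: lt0r_neq0.
Qed.
Lemma nonincr0 (R : realType) (g dg : R -> R) :
  (forall s : R, 0 <= s -> is_derive s 1 g (dg s)) ->
  (forall s : R, 0 <= s -> dg s <= 0) -> forall t : R, 0 <= t -> g t <= g 0.
Proof.
move=> hd hle t t0.
have [c /[1!in_itv] /andP[c0 _] hc] := MVT_segment t0 (fun x (xin : x \in `]0, t[) => hd x (ltW (andP xin).1)) 
  (derivable_within_continuous (fun x (xin : x \in `[0, t]) => @ex_derive _ _ _ _ _ _ _ (hd x (andP xin).1))).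
rewrite -subr_le0 hc subr0; apply: mulr_le0_ge0 => //; exact: hle.
Qed.
Lemma dsq (R : realType) (a : R -> R) (w da x : R) :
  is_derive x 1 a da ->
  is_derive x 1 (fun s => (a s - w) ^+ 2 / w) (2 * (a x - w) / w * da).
Proof.
move=> ha.
have hb : is_derive x 1 (fun s => a s - w) da.
  have := @is_deriveB _ _ _ a (cst w) x 1 da 0 ha (is_derive_cst _ _ _).
  by rewrite subr0 => h; exact: h.
have h2 := @is_deriveX _ _ (fun s => a s - w) 2 x 1 da hb.
have h3 := @is_deriveM _ _ (fun s => (a s - w) ^+ 2) (cst w^-1) x 1 _ 0 h2 (is_derive_cst _ _ _).
have h4 : is_derive x 1 (fun s => (a s - w) ^+ 2 / w) _ := h3.
apply: (is_derive_eq h4).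
rewrite /= scaler0 add0r /GRing.scale /= expr1; ring.
Qed.
Lemma key_id (R : realType) (n : nat) (q : 'I_n -> 'I_n -> R) (w u v : 'I_n -> R) :
  (forall i, \sum_j q j i * w j = \sum_j q i j * w i) ->
  (forall j, v j = w j + w j * u j) ->
  2 * \sum_i u i * \sum_j (q j i * v j - q i j * v i)
  = - \sum_i \sum_j q i j * w i * (u i - u j) ^+ 2.
Proof.
move=> hs hv.
have -> : v = (fun j => w j + w j * u j) by apply/funext => j; exact: hv.
have e1 : \sum_i u i * \sum_j (q j i * (w j + w j * u j) - q i j * (w i + w i * u i))
  = \sum_i \sum_j (u i * q j i * w j * u j) - \sum_i \sum_j (q i j * w i * u i ^+ 2).
  rewrite -sumrB; apply: eq_bigr => i _.
  have := hs i => hsi.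
  transitivity (u i * (\sum_j q j i * w j - \sum_j q i j * w i) +
    \sum_j (u i * q j i * w j * u j - q i j * w i * u i ^+ 2)).
    rewrite -sumrB !mulr_sumr -big_split /=; apply: eq_bigr => j _; ring.
  by rewrite hsi subrr mulr0 add0r sumrB.
have eC : \sum_i \sum_j q i j * w i * u j ^+ 2 = \sum_i \sum_j q i j * w i * u i ^+ 2.
  rewrite exchange_big /=.
  transitivity (\sum_j u j ^+ 2 * \sum_i q i j * w i).
    by apply: eq_bigr => j _; rewrite mulr_sumr; apply: eq_bigr => i _; ring.
  apply: eq_bigr => j _; rewrite hs mulr_sumr; apply: eq_bigr => i _; ring.
have eB : \sum_i \sum_j (u i * q j i * w j * u j) = \sum_i \sum_j q i j * w i * u i * u j.
  rewrite exchange_big /=; apply: eq_bigr => i _; apply: eq_bigr => j _; ring.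
have eR : \sum_i \sum_j q i j * w i * (u i - u j) ^+ 2 =
  \sum_i \sum_j q i j * w i * u i ^+ 2 - 2 * \sum_i \sum_j q i j * w i * u i * u j
  + \sum_i \sum_j q i j * w i * u j ^+ 2.
  rewrite mulr_sumr -!sumrB -big_split /=; apply: eq_bigr => i _.
  rewrite mulr_sumr -!sumrB -big_split /=; apply: eq_bigr => j _; ring.
rewrite e1 eR eC eB; ring.
Qed.

Lemma ss_q (R : realType) (n l : nat)
  (y : 'I_n -> 'I_l -> R) (vol : 'I_n -> R) (gam : 'I_n -> 'I_n -> R)
  (nb : rel 'I_n) (bn : 'I_n -> 'I_n -> R) (D : R) (pi : 'I_n -> R)
  (hnb_irr : forall i, ~~ nb i i)
  (hss : steady_state y vol gam nb bn D pi) i :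
  \sum_j Qoff y vol gam nb bn D j i * (pi j * vol j) =
  \sum_j Qoff y vol gam nb bn D i j * (pi i * vol i).
Proof.
have hq0 : forall k, Qoff y vol gam nb bn D k k = 0.
  by move=> k; rewrite /Qoff (negbTE (hnb_irr k)).
have := hss i; rewrite (bigD1 i) //=.
rewrite (eq_bigr (fun j => Qoff y vol gam nb bn D j i * pi j * vol j)); last first.
  by move=> j hj; rewrite /Qmat (negbTE hj).
rewrite /Qmat eqxx.
move/eqP; rewrite addrC addr_eq0 => /eqP H.
rewrite [LHS](bigD1 i) //= [RHS](bigD1 i) //= !hq0 mul0r !add0r -mulr_suml.
under eq_bigr do rewrite mulrA.
by rewrite H !mulNr opprK mulrA.
Qed.
Theorem mainTheorem4 (R : realType) (n l : nat)
  (y : 'I_n -> 'I_l -> R) (vol : 'I_n -> R) (gam : 'I_n -> 'I_n -> R)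
  (nb : rel 'I_n) (bn : 'I_n -> 'I_n -> R) (D CP : R)
  (pi : 'I_n -> R) (rho : R -> 'I_n -> R)
  (* Setting U: distinct points, positive volumes, faces *)
  (hy : forall i j, y i = y j -> i = j)
  (hvol : forall i, 0 < vol i)
  (hnb_irr : forall i, ~~ nb i i)
  (hnb_sym : forall i j, nb i j = nb j i)
  (hgam_sym : forall i j, gam i j = gam j i)
  (hgam_pos : forall i j, nb i j -> 0 < gam i j)
  (hgam_0 : forall i j, ~~ nb i j -> gam i j = 0)
  (hconn : forall i j, connect nb i j)
  (hbn : forall i j, nb i j -> bn j i = - bn i j)
  (hD : 0 < D)
  (* positive steady state *)
  (hpi : forall i, 0 < pi i)
  (hss : steady_state y vol gam nb bn D pi)
  (* Poincare inequality *)
  (hCP : 0 < CP)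
  (hP : forall u : 'I_n -> R, \sum_i u i * pi i * vol i = 0 ->
     \sum_i u i ^+ 2 * pi i * vol i <=
       CP * \sum_i \sum_j gam i j * (pi i + pi j) / eucl_dist (y i) (y j)
                            * (u i - u j) ^+ 2)
  (* rho solves the upwind scheme for t >= 0 *)
  (hrho : forall t : R, 0 <= t -> forall i : 'I_n,
     is_derive t (1 : R) (fun s : R => rho s i * vol i)
       (upwind_rhs y gam nb bn D (rho t) i))
  (hmass : \sum_i rho 0 i * vol i = \sum_i pi i * vol i) :
  forall t : R, 0 <= t ->
    \sum_i (rho t i - pi i) ^+ 2 / pi i * vol i <=
      expR (- (D / (2 * CP)) * t) * \sum_i (rho 0 i - pi i) ^+ 2 / pi i * vol i.
Proof.
move=> t t0.
set q := Qoff y vol gam nb bn D.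
set w := fun i => pi i * vol i.
have hw : forall i, 0 < w i by move=> i; rewrite /w mulr_gt0.
have hss' : forall i, \sum_j q j i * w j = \sum_j q i j * w i.
  by move=> i; exact: (@ss_q _ _ _ y vol gam nb bn D pi hnb_irr hss i).
have hfl : forall r i, upwind_rhs y gam nb bn D r i =
    \sum_j (q j i * (r j * vol j) - q i j * (r i * vol i)).
  by move=> r i; exact: (@flux _ _ _ y vol gam nb bn D r hvol hnb_sym hgam_sym hbn i).
set m := fun s => \sum_i rho s i * vol i.
have dm : forall s : R, 0 <= s -> is_derive s 1 m 0.
  move=> s s0; have h := @dsum _ _ _ _ _ (fun i => hrho s s0 i).
  suff <- : \sum_i upwind_rhs y gam nb bn D (rho s) i = 0 by exact: h.
  under eq_bigr do rewrite hfl sumrB.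
  by rewrite sumrB exchange_big subrr.
have mt : forall s : R, 0 <= s -> m s = m 0.
  move=> s s0; apply/eqP; rewrite eq_le; apply/andP; split.
    exact: (@nonincr0 _ m (fun=> 0) dm (fun _ _ => lexx 0) s s0).
  rewrite -lerN2.
  have dm' : forall s : R, 0 <= s -> is_derive s 1 (fun s => - m s) 0.
    by move=> x x0; have := is_deriveN (dm x x0); rewrite oppr0.
  exact: (@nonincr0 _ (fun s => - m s) (fun=> 0) dm' (fun _ _ => lexx 0) s s0).
set E := fun s => \sum_i (rho s i - pi i) ^+ 2 / pi i * vol i.
set dE := fun s => \sum_i 2 * (rho s i * vol i - w i) / w i * upwind_rhs y gam nb bn D (rho s) i.
have hE : forall s : R, 0 <= s -> is_derive s 1 E (dE s).
  move=> s s0.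
  have h := @dsum _ _ _ _ _ (fun i => @dsq _ _ (w i) _ _ (hrho s s0 i)).
  have -> : E = (fun s => \sum_i (rho s i * vol i - w i) ^+ 2 / w i).
    apply/funext => x; apply: eq_bigr => i _; rewrite /w.
    have := hvol i; have := hpi i => p0 v0; field.
    by apply/andP; split; exact: lt0r_neq0.
  exact: h.
set c := D / (2 * CP).
have hc : 0 < c by rewrite /c divr_gt0 // mulr_gt0.
have hq : forall i j, nb i j ->
    q i j * w i = gam i j * pi i * D / eucl_dist (y i) (y j)
                  + gam i j * pi i * posp (bn i j).
  move=> i j nij; rewrite /q /Qoff nij /w (@dist_sym _ _ (y j)).
  have := hvol i => v0.
  move: (eucl_dist (y i) (y j)) => d; set k := d^-1.
  have e : forall z : R, z / d = z * k by move=> z; rewrite /k.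
  field; exact: lt0r_neq0.
have bound : forall s : R, 0 <= s -> dE s <= - c * E s.
  move=> s s0.
  set r := rho s.
  set u := fun i => (r i * vol i - w i) / w i.
  have huw : forall j, r j * vol j = w j + w j * u j.
    move=> j; rewrite /u; have := hw j => w0; field; exact: lt0r_neq0.
  have e1 : dE s = - \sum_i \sum_j q i j * w i * (u i - u j) ^+ 2.
    rewrite -(@key_id _ _ q w u (fun j => r j * vol j) hss' huw).
    rewrite /dE mulr_sumr; apply: eq_bigr => i _; rewrite hfl /u; rewrite /r; ring.
  have eE : E s = \sum_i u i ^+ 2 * pi i * vol i.
    apply: eq_bigr => i _; rewrite /u /w /r.
    have := hvol i; have := hpi i => p0 v0; field.
    by apply/andP; split; exact: lt0r_neq0.
  have hu0 : \sum_i u i * pi i * vol i = 0.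
    have e : \sum_i u i * pi i * vol i = m s - \sum_i pi i * vol i.
      rewrite /m -sumrB; apply: eq_bigr => i _; rewrite /u /w /r.
      have := hvol i; have := hpi i => p0 v0; field.
      by apply/andP; split; exact: lt0r_neq0.
    by rewrite e mt // /m hmass subrr.
  have hPu := hP u hu0.
  set T := \sum_i \sum_j gam i j * pi i / eucl_dist (y i) (y j) * (u i - u j) ^+ 2.
  have ST : \sum_i \sum_j gam i j * (pi i + pi j) / eucl_dist (y i) (y j) * (u i - u j) ^+ 2
            = 2 * T.
    have sp : \sum_i \sum_j gam i j * (pi i + pi j) / eucl_dist (y i) (y j) * (u i - u j) ^+ 2
       = T + \sum_i \sum_j gam i j * pi j / eucl_dist (y i) (y j) * (u i - u j) ^+ 2.
      rewrite /T -big_split; apply: eq_bigr => i _; rewrite -big_split; apply: eq_bigr => j _.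
      rewrite /=; ring.
    rewrite sp exchange_big /=.
    have -> : \sum_j \sum_i gam i j * pi j / eucl_dist (y i) (y j) * (u i - u j) ^+ 2 = T.
      apply: eq_bigr => i _; apply: eq_bigr => j _.
      by rewrite hgam_sym (@dist_sym _ _ (y j)) -sqrrN opprB.
    ring.
  have qT : D * T <= \sum_i \sum_j q i j * w i * (u i - u j) ^+ 2.
    rewrite /T mulr_sumr; apply: ler_sum => i _; rewrite mulr_sumr; apply: ler_sum => j _.
    case nij : (nb i j).
      rewrite hq // -subr_ge0.
      have -> : (gam i j * pi i * D / eucl_dist (y i) (y j) + gam i j * pi i * posp (bn i j)) *
          (u i - u j) ^+ 2 - D * (gam i j * pi i / eucl_dist (y i) (y j) * (u i - u j) ^+ 2)
          = gam i j * pi i * posp (bn i j) * (u i - u j) ^+ 2 by ring.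
      apply: mulr_ge0; last exact: sqr_ge0.
      apply: mulr_ge0; last by rewrite /posp le_max lexx orbT.
      by apply: mulr_ge0; [exact: ltW (hgam_pos _ _ nij)|exact: ltW (hpi i)].
    rewrite hgam_0 ?nij // /q /Qoff nij !mul0r !mulr0; exact: lexx.
  rewrite e1 eE.
  have h1 : c * (\sum_i u i ^+ 2 * pi i * vol i) <= c * (CP * (2 * T)).
    by rewrite -ST; apply: ler_wpM2l => //; exact: ltW.
  have h2 : c * (CP * (2 * T)) = D * T.
    rewrite /c; field; exact: lt0r_neq0.
  rewrite mulNr lerN2; apply: le_trans qT; rewrite -h2; exact: h1.
set g := fun s => expR (c * s) * E s.
set dg := fun s => expR (c * s) * dE s + E s * (expR (c * s) * c).
have hg : forall s : R, 0 <= s -> is_derive s 1 g (dg s).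
  move=> s s0.
  have hlin : is_derive s 1 (fun x => c * x) c.
    have := @is_deriveZ _ _ _ id c s 1 1 (is_derive_id s 1).
    by rewrite /GRing.scale /= mulr1 => h; exact: h.
  have hex := @is_derive1_comp _ expR (fun x => c * x) s _ _ (is_derive_expR (c * s)) hlin.
  have h := @is_deriveM _ _ (fun x => expR (c * x)) E s 1 _ _ hex (hE s s0).
  exact: h.
have dgle : forall s : R, 0 <= s -> dg s <= 0.
  move=> s s0; rewrite /dg.
  have := bound s s0 => b.
  have ex := expR_gt0 (c * s).
  have -> : expR (c * s) * dE s + E s * (expR (c * s) * c) =
     expR (c * s) * (dE s + c * E s) by ring.
  apply: mulr_ge0_le0; first exact: ltW.
  by rewrite -lerBrDr sub0r -mulNr.
have := @nonincr0 _ g dg hg dgle t t0.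
rewrite /g mulr0 expR0 mul1r => hgt.
change (E t <= expR (- c * t) * E 0).
have -> : E t = expR (- c * t) * (expR (c * t) * E t).
  by rewrite mulrA -expRD mulNr addNr expR0 mul1r.
by apply: ler_wpM2l => //; exact: ltW (expR_gt0 _).
Qed.
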